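(* Let $r\ge 1$ and $m\ge 0$ be integers. Then for every integer $k\ge 0$, $$(-1)^{\binom{r}{2}}\det\left(\binom{k+i+j}{m+r-1}\right)_{i,j=0}^{r-1}=\left\langle \begin{matrix} k\\ m\end{matrix}\right\rangle_r .$$ Equivalently, the matrix $\left((-1)^{\binom r2}\det\left(\binom{k+i+j}{m+r-1}\right)_{i,j=0}^{r-1}\right)_{k,m\ge 0}$ equals the $r$-Hoggatt matrix $\left(\left\langle \begin{smallmatrix} k\\ m\end{smallmatrix}\right\rangle_r\right)_{k,m\ge0}$.
   Context: For an integer $x$ and integer $r>0$ the rising factorial is $x^{(r)}=x(x+1)\cdots(x+r-1)$, with $x^{(0)}=1$. For a positive integer $r$ and integers $n,k$ the $r$-Hoggatt binomial is defined by $$\left\langle \begin{matrix} n\\ k\end{matrix}\right\rangle_r=\prod_{j=1}^{k}\frac{(n-k+j)^{(r)}}{(j)^{(r)}}\quad\text{for }0\le k\le n,$$ (an empty product being $1$), and $\left\langle \begin{smallmatrix} n\\ k\end{smallmatrix}\right\rangle_r=0$ otherwise. Binomial coefficients $\binom{a}{b}$ for integers $a\ge0$, $b\ge 0$ are the usual ones (zero if $b>a$). *)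

(* Defs.v *)
From mathcomp Require Import all_boot all_order all_algebra.
Set Implicit Arguments. Unset Strict Implicit. Unset Printing Implicit Defensive.
Import Order.TTheory GRing.Theory Num.Theory.
Local Open Scope ring_scope.

Definition rising (x : int) (r : nat) : int := \prod_(i < r) (x + i%:Z).

Definition hoggatt (r : nat) (n k : int) : rat :=
  if (0 <= k) && (k <= n) then
    \prod_(1 <= j < `|k|%N.+1)
      ((rising (n - k + j%:Z) r)%:~R / (rising j%:Z r)%:~R)
  else 0.

Definition binom_mx (r k m : nat) : 'M[int]_r :=
  \matrix_(i < r, j < r) ('C(k + i + j, m + r - 1))%:Z.

(* Main.v *)
Require Import Defs.
From mathcomp Require Import all_boot all_order all_algebra.
From mathcomp Require Import ring zify.
Import GRing.Theory Num.Theory.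
Local Open Scope ring_scope.

Definition ff (x : rat) (n : nat) : rat := \prod_(t < n) (x - t%:R).
Definition bn (x : rat) (n : nat) : rat := ff x n / n`!%:R.
Definition bnz (x : rat) (n p : nat) : rat := if (p <= n)%N then bn x (n - p) else 0.

Lemma fact_neq0 n : n`!%:R != 0 :> rat.
Proof. by rewrite pnatr_eq0 -lt0n fact_gt0. Qed.

Lemma ffS_l x n : ff x n.+1 = x * ff (x - 1) n.
Proof.
rewrite /ff big_ord_recl /= subr0; congr (_ * _); apply: eq_bigr => i _.
by rewrite /bump /= -addn1 natrD; ring.
Qed.

Lemma ffS_r x n : ff x n.+1 = ff x n * (x - n%:R).
Proof. by rewrite /ff big_ord_recr. Qed.

Lemma ff_nat a n : ff a%:R n = (a ^_ n)%:R.
Proof.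
elim: n a => [|n IH] a; first by rewrite /ff big_ord0 ffactn0.
rewrite ffS_l; case: a => [|a].
  by rewrite mul0r ffact0n.
rewrite -addn1 natrD addrK IH ffactnS /= addn1 natrM.
by rewrite natr1.
Qed.

Lemma bn_nat a n : bn a%:R n = 'C(a, n)%:R.
Proof.
rewrite /bn ff_nat -bin_ffact natrM mulfK //; exact: fact_neq0.
Qed.

Lemma bn0 x : bn x 0 = 1.
Proof. by rewrite /bn /ff big_ord0 divr1. Qed.

Lemma pascal x n : bn (x + 1) n.+1 = bn x n.+1 + bn x n.
Proof.
rewrite /bn ffS_l addrK ffS_r factS natrM.
have h1 := fact_neq0 n.
have h2 : n.+1%:R != 0 :> rat by rewrite pnatr_eq0.
move: h2; rewrite -addn1 natrD => h2.
field; by rewrite h1 h2.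
Qed.

Lemma bnz_pascal x n p : bnz (x + 1) n p = bnz x n p + bnz x n p.+1.
Proof.
rewrite /bnz; case: ltngtP => h.
- by rewrite -(subnSK h) pascal.
- by rewrite addr0.
- by rewrite h subnn !bn0 addr0.
Qed.

Lemma CV i z n : bn (z + i%:R) n = \sum_(p < i.+1) 'C(i, p)%:R * bnz z n p.
Proof.
elim: i z => [|i IH] z.
  by rewrite big_ord1 addr0 bin0 mul1r /bnz leq0n subn0.
have -> : z + i.+1%:R = (z + 1) + i%:R by rewrite -natr1; ring.
rewrite IH.
under eq_bigr => p _ do rewrite bnz_pascal mulrDr.
rewrite big_split /= [RHS]big_ord_recl bin0 mul1r.
under [in RHS]eq_bigr => p _ do rewrite lift0 binS natrD mulrDl.
rewrite big_split /= addrA; congr (_ + _).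
rewrite big_ord_recl bin0 mul1r; congr (_ + _).
rewrite [RHS]big_ord_recr /= bin_small // mul0r addr0.
by [].
Qed.

Lemma CVN N i z n : (i < N)%N ->
  bn (z + i%:R) n = \sum_(p < N) 'C(i, p)%:R * bnz z n p.
Proof.
move=> hi; rewrite CV (big_ord_widen N (fun p => 'C(i, p)%:R * bnz z n p) hi).
rewrite big_mkcond /=; apply: eq_bigr => p _.
by case: ltnP => // hp; rewrite bin_small // mul0r.
Qed.

Lemma ff_split x a b : ff x (a + b) = ff x a * ff (x - a%:R) b.
Proof.
rewrite /ff big_split_ord /=; congr (_ * _); apply: eq_bigr => i _.
by rewrite natrD; ring.
Qed.

Lemma det_anti n (M : 'M[rat]_n) :
  (forall i j : 'I_n, (n <= i + j)%N -> M i j = 0) ->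
  (forall i j : 'I_n, (i + j)%N = n.-1 -> M i j = 1) ->
  \det M = (-1) ^+ 'C(n, 2).
Proof.
elim: n M => [|n IH] M h0 h1; first by rewrite det_mx00.
rewrite (expand_det_row M ord_max) (bigD1 ord0) //= big1 ?addr0; last first.
  move=> j hj; rewrite h0 ?mul0r //=.
  have : (j : nat) != 0%N by apply: contraNneq hj => hj0; apply/eqP/val_inj.
  move: (j : nat) => jj; rewrite -lt0n => hjj.
  by rewrite -addn1 leq_add2l.
rewrite h1 /= ?addn0 // mul1r /cofactor addn0.
rewrite (IH _).
- by rewrite binS bin1 exprD mulrC.
- by move=> i j hij; rewrite !mxE h0 // lift_max lift0 addnS ltnS.
- move=> i j hij; rewrite !mxE h1 // lift_max lift0 addnS hij.
  by case: n i {IH h0 h1 M j hij} => [[]|].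
Qed.

Lemma main_det r' k m :
  let n := r'.+1 in
  \det (map_mx intr (binom_mx n k m) : 'M[rat]_n) =
  (-1) ^+ 'C(n, 2) * ((\prod_(p < n) ((m + r' - p)`!%:R)^-1) *
    (\prod_(p < n) (r' - p)`!%:R) * \prod_(j < n) ff (k%:R + j%:R) m).
Proof.
move=> n.
set s := (m + r')%N.
pose Lmx : 'M[rat]_n := \matrix_(i, p) 'C(i, p)%:R.
pose Nmx : 'M[rat]_n := \matrix_(p, j) bn (k%:R + j%:R) (s - p).
have eA : map_mx intr (binom_mx n k m) = Lmx *m Nmx.
  apply/matrixP => i j; rewrite !mxE.
  have -> : ('C(k + i + j, m + n - 1) : int)%:~R = 'C(k + i + j, s)%:R :> rat.
    by rewrite /n addnS subSS subn0.
  rewrite -bn_nat !natrD -addrA [_ + j%:R]addrC addrA (CVN n) //.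
  apply: eq_bigr => p _; rewrite !mxE /bnz.
  have -> : (p <= s)%N by rewrite /s (leq_trans _ (leq_addl m r')) // -ltnS.
  by [].
have dL : \det Lmx = 1.
  rewrite det_trig; last by apply/is_trig_mxP => i j h; rewrite mxE bin_small.
  by apply: big1 => i _; rewrite mxE binn.
pose d1 : 'rV[rat]_n := \row_p ((s - p)`!%:R)^-1.
pose d2 : 'rV[rat]_n := \row_j ff (k%:R + j%:R) m.
pose d3 : 'rV[rat]_n := \row_p (r' - p)`!%:R.
pose z : rat := k%:R - m%:R.
pose Rmx : 'M[rat]_n := \matrix_(p, j) bn (z + j%:R) (r' - p).
pose Mmx : 'M[rat]_n := \matrix_(p, q) bnz z (r' - p) q.
have eN : Nmx = diag_mx d1 *m (diag_mx d3 *m Rmx) *m diag_mx d2.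
  apply/matrixP => p j; rewrite mul_mx_diag mul_diag_mx [diag_mx d3 *m _]mul_diag_mx !mxE.
  have hp : (p <= r')%N by rewrite -ltnS.
  rewrite /bn /s -addnBA // ff_split mulrC /z.
  have h1 := fact_neq0 (r' - p).
  have h2 := fact_neq0 (m + (r' - p)).
  rewrite /bn addrAC.
  field; by rewrite h1 h2.
have eR : Rmx = Mmx *m Lmx^T.
  apply/matrixP => p j; rewrite !mxE (CVN n) //.
  by apply: eq_bigr => q _; rewrite !mxE mulrC.
have dM : \det Mmx = (-1) ^+ 'C(n, 2).
  apply: det_anti => i j h; rewrite mxE /bnz; rewrite /n in i j h *.
    have := ltn_ord i; have := ltn_ord j.
    by case: ifP => // hh; lia.
  have := ltn_ord i; have := ltn_ord j => hj hi.
  have -> : (j <= r' - i)%N by lia.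
  have -> : (r' - i - j = 0)%N by lia.
  exact: bn0.
rewrite eA det_mulmx dL mul1r eN !det_mulmx !det_diag eR det_mulmx det_tr dL dM.
rewrite mulr1.
under eq_bigr => i _ do rewrite mxE.
under [\prod_(i < n) d3 0 i]eq_bigr => i _ do rewrite mxE.
under [\prod_(i < n) d2 0 i]eq_bigr => i _ do rewrite mxE.
ring.
Qed.

Lemma prod_ff z m : \prod_(1 <= j < m.+1) (z - m%:R + j%:R) = ff z m.
Proof.
elim: m => [|m IH]; first by rewrite big_geq // /ff big_ord0.
rewrite big_nat_recl // ffS_r -IH mulrC; congr (_ * _).
  by apply: eq_bigr => j _; rewrite -!natr1; ring.
by rewrite -natr1; ring.
Qed.

Lemma prod_fact m t : \prod_(1 <= j < m.+1) (j%:R + t%:R) = (m + t)`!%:R / t`!%:R :> rat.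
Proof.
elim: m => [|m IH]; first by rewrite big_geq // add0n divff ?fact_neq0.
rewrite big_nat_recr //= IH addSn factS natrM -natrD addSn.
by rewrite mulrC mulrA.
Qed.

Lemma hog_prod m k n :
  \prod_(1 <= j < m.+1)
      ((rising (k%:Z - m%:Z + j%:Z) n)%:~R / (rising j%:Z n)%:~R : rat)
  = \prod_(t < n) (ff (k%:R + t%:R) m / ((m + t)`!%:R / t`!%:R)).
Proof.
rewrite prodf_div [RHS]prodf_div /rising.
under eq_bigr do rewrite rmorph_prod.
under [X in _ / X]eq_bigr do rewrite rmorph_prod.
rewrite exchange_big [X in _ / X]exchange_big /=.
congr (_ / _); apply: eq_bigr => t _.
  rewrite -prod_ff; apply: eq_bigr => j _.
  by rewrite !rmorphD /= rmorphN /=; ring.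
rewrite -(prod_fact m t); apply: eq_bigr => j _.
by rewrite !rmorphD.
Qed.

Theorem theorem1 (r m k : nat) (hr : (1 <= r)%N) :
  (((-1) ^+ 'C(r, 2) * \det (binom_mx r k m))%:~R : rat)
  = hoggatt r k%:Z m%:Z.
Proof.
case: r hr => [//|r'] _.
rewrite rmorphM rmorphXn rmorphN1 -det_map_mx main_det mulrA -exprD.
rewrite -signr_odd oddD addbb expr0 mul1r /hoggatt /=.
case: (leqP m k) => hmk; last first.
  rewrite lez_nat leqNgt hmk /= [\prod_(j < r'.+1) ff _ _]big_ord_recl /= addr0 ff_nat ffact_small //.
  by rewrite mul0r mulr0.
rewrite lez_nat hmk /= hog_prod.
rewrite -big_split /= (reindex_inj rev_ord_inj) /= -big_split /=.
apply: eq_bigr => t _.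
have ht : (t <= r')%N by rewrite -ltnS.
rewrite subSS subKn // -addnBA ?leq_subr // subKn //.
have h1 := fact_neq0 t; have h2 := fact_neq0 (m + t).
field; by rewrite h1 h2.
Qed.
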